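(* Let $k\ge3$, let $G$ be a graph and $L$ a $k$-list assignment for $G$. Let $B$ be a bug in $G$ with root $r$ satisfying $d_G(r)\le k$, and suppose that the number of neighbors of $r$ in $V(G)\setminus V(B)$ is less than $|V(B)|$ and $|V(B)|\le k$. If $B$ has a hidden vertex, then $B$ is safe in $G$.
   Context: $V_{3^+}(G)$ is the set of vertices of degree at least $3$ in $G$. A bug in $G$ is an induced connected subgraph $B$ together with a vertex $r\in V(B)$, its root, such that $V(B)\cap V_{3^+}(G)\subseteq\{r\}$. A vertex $y\in V(B)$ is hidden if $N_G(y)\subseteq V(B)$. A $k$-list assignment $L$ assigns to each vertex $v$ a set $L(v)$ of exactly $k$ colors; an $L$-coloring is a proper vertex coloring $f$ with $f(v)\in L(v)$. For an integer $n$ and $k\ge1$, $n\bmod^* k$ is the unique $m\in\{1,\dots,k\}$ with $n\equiv m\pmod k$. If $|V(G)|=n\ge 1$, an $L$-coloring $f$ of $G$ is strongly equitable (SE) if every color class has at most $\lceil n/k\rceil$ vertices and the number of colors whose class has exactly $\lceil n/k\rceil$ vertices (the full classes) is at most $n\bmod^* k$; the empty graph is regarded as SE $L$-colorable. A subgraph $S\subseteq G$ is safe in $G$ if every SE $L$-coloring of $G-V(S)$ (with the restriction of $L$) can be extended to an SE $L$-coloring of $G$. *)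

(* Defs.v *)
From mathcomp Require Import all_boot.
Set Implicit Arguments. Unset Strict Implicit. Unset Printing Implicit Defensive.

Definition simple_graph (T : finType) (e : rel T) : Prop :=
  symmetric e /\ irreflexive e.

Section Defs.
Variables (T : finType) (e : rel T).

Definition deg (v : T) : nat := #|[set u | e v u]|.

Definition V3plus : {set T} := [set v | 3 <= deg v].

(* B (given by its vertex set VB, as an induced subgraph) is connected *)
Definition induced_connected (VB : {set T}) : Prop :=
  forall x y, x \in VB -> y \in VB ->
    connect [rel a b | [&& e a b, a \in VB & b \in VB]] x y.

Definition is_bug (VB : {set T}) (r : T) : Prop :=
  [/\ r \in VB, induced_connected VB & VB :&: V3plus \subset [set r]].

Definition hidden (VB : {set T}) (y : T) : Prop :=
  y \in VB /\ [set u | e y u] \subset VB.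

Definition ceil_div (n k : nat) : nat := (n + k.-1) %/ k.
Definition modstar (n k : nat) : nat := if n %% k == 0 then k else n %% k.

Variable C : finType.

(* f is an L-colouring of the induced subgraph G[U] (values of f outside U are ignored) *)
Definition L_coloring (L : T -> {set C}) (U : {set T}) (f : T -> C) : Prop :=
  (forall v, v \in U -> f v \in L v) /\
  (forall x y, x \in U -> y \in U -> e x y -> f x != f y).

Definition SE_coloring (k : nat) (L : T -> {set C}) (U : {set T}) (f : T -> C) : Prop :=
  L_coloring L U f /\
  (#|U| = 0 \/
   ((forall c : C, #|[set v in U | f v == c]| <= ceil_div #|U| k) /\
    #|[set c : C | #|[set v in U | f v == c]| == ceil_div #|U| k]| <= modstar #|U| k)).

Definition safe (k : nat) (L : T -> {set C}) (VS : {set T}) : Prop :=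
  forall f : T -> C, SE_coloring k L (~: VS) f ->
    exists g : T -> C, SE_coloring k L [set: T] g /\ (forall v, v \in ~: VS -> g v = f v).

End Defs.

(* Main.v *)
Require Import Defs.
From mathcomp Require Import all_boot zify.
Set Implicit Arguments. Unset Strict Implicit. Unset Printing Implicit Defensive.

Lemma ceil_char k Q M n : 0 < k -> 0 < Q -> 0 < M -> M <= k -> n = (Q - 1) * k + M ->
  ceil_div n k = Q /\ modstar n k = M.
Proof.
move=> k0 Q0 M0 Mk ->; split.
  rewrite /ceil_div.
  have -> : (Q - 1) * k + M + k.-1 = Q * k + M.-1.
    have -> : Q = (Q - 1).+1 by lia.
    rewrite mulSn; lia.
  rewrite divnMDl // divn_small ?addn0 //; lia.
rewrite /modstar modnMDl.
case: (ltnP M k) => hM.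
  by rewrite modn_small // (negbTE (lt0n_neq0 M0)).
have -> : M = k by lia.
by rewrite modnn eqxx.
Qed.

Lemma decomp n k : 0 < k -> 0 < n ->
  [/\ n = (ceil_div n k - 1) * k + modstar n k, 0 < modstar n k, modstar n k <= k & 0 < ceil_div n k].
Proof.
move=> k0 n0.
have e := divn_eq n k.
have rk := ltn_pmod n k0.
case: (posnP (n %% k)) => r0.
  have a0 : 0 < n %/ k.
    move: e; rewrite r0 addn0; case: (n %/ k) => // e; lia.
  have ee : n = (n %/ k - 1) * k + k.
    rewrite {1}e r0 addn0 -{1}(prednK a0) mulSn subn1; lia.
  have [h1 h2] := @ceil_char k (n %/ k) k n k0 a0 k0 (leqnn k) ee.
  by rewrite h1 h2; split => //; lia.
have ee : n = ((n %/ k).+1 - 1) * k + n %% k by rewrite subn1 /=.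
have [h1 h2] := @ceil_char k (n %/ k).+1 (n %% k) n k0 (ltn0Sn _) r0 (ltnW rk) ee.
by rewrite h1 h2; split => //; lia.
Qed.
Lemma greedy (T C : finType) (A : T -> {set C}) (S : {set C}) (g0 : T -> C) (s : seq T) :
  uniq s -> (forall v, v \in s -> index v s < #|A v|) ->
  exists g : T -> C, [/\ forall v, v \in s -> g v \in A v,
   {in s &, injective g} &
   forall v, v \in s -> g v \in S -> A v :\: S \subset
     g @: [set x | [&& x \in s, index x s < index v s & g x \notin S]]].
Proof.
elim/last_ind: s => [|s v IH].
  by move=> _ _; exists g0; split.
rewrite rcons_uniq => /andP[vns us] hA.
have idx : forall w, w \in s -> index w (rcons s v) = index w s.
  by move=> w ws; rewrite -cats1 index_cat ws.
have idxv : index v (rcons s v) = size s.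
  by rewrite -cats1 index_cat (negbTE vns) /= eqxx addn0.
have [g [gA ginj gS]] : exists g : T -> C, [/\ forall v, v \in s -> g v \in A v,
   {in s &, injective g} &
   forall v, v \in s -> g v \in S -> A v :\: S \subset
     g @: [set x | [&& x \in s, index x s < index v s & g x \notin S]]].
  apply: IH => // w ws; rewrite -idx //; apply: hA; by rewrite mem_rcons in_cons ws orbT.
set U := g @: [set x | x \in s].
have cU : #|U| <= size s.
  apply: leq_trans (leq_imset_card _ _) _.
  by rewrite cardsE (card_uniqP us).
have hv : size s < #|A v|.
  by rewrite -idxv; apply: hA; rewrite mem_rcons in_cons eqxx.
have [c [cA cU' cS]] : exists c, [/\ c \in A v, c \notin U & (c \in S -> A v :\: S \subset U)].
  case: (set0Pn ((A v :\: U) :\: S)) => [[c]|h].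
    rewrite !inE => /and3P[cnS cnU cA]; exists c; split => //.
    by rewrite (negbTE cnS).
  have : A v :\: U != set0.
    rewrite -card_gt0 cardsD.
    have: #|A v :&: U| <= #|U| by apply: subset_leq_card; apply: subsetIr.
    lia.
  case/set0Pn => c; rewrite inE => /andP[cnU cA]; exists c; split => // cS.
  apply/subsetP => z; rewrite inE => /andP[znS zA].
  apply/negPn/negP => znU; apply: h; exists z; by rewrite !inE znS znU zA.
pose g' := fun x => if x == v then c else g x.
have g'E : forall x, x \in s -> g' x = g x.
  by move=> x xs; rewrite /g'; case: eqP => // exv; rewrite -exv xs in vns.
have g'v : g' v = c by rewrite /g' eqxx.
have sub : forall w, w \in s -> g @: [set x | [&& x \in s, index x s < index w s & g x \notin S]]
   \subset g' @: [set x | [&& x \in rcons s v, index x (rcons s v) < index w (rcons s v) & g' x \notin S]].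
  move=> w ws; apply/subsetP => z /imsetP [x]; rewrite inE => /and3P[xs ix gx] ->.
  rewrite -g'E //; apply: imset_f; rewrite inE mem_rcons in_cons xs orbT /= !idx // ix /=.
  by rewrite g'E.
exists g'; split.
- move=> w; rewrite mem_rcons in_cons => /orP[/eqP->|ws]; first by rewrite g'v.
  by rewrite g'E // gA.
- move=> x y; rewrite !mem_rcons !in_cons => /orP[/eqP->|xs] /orP[/eqP->|ys] //.
  + rewrite g'v g'E // => ecg; case/negP: cU'; rewrite ecg; apply: imset_f; by rewrite inE.
  + rewrite g'v g'E // => ecg; case/negP: cU'; rewrite -ecg; apply: imset_f; by rewrite inE.
  + rewrite !g'E //; exact: ginj.
- move=> w; rewrite mem_rcons in_cons => /orP[/eqP->|ws].
    rewrite g'v => /cS sU; apply/subsetP => z zin.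
    have := subsetP sU z zin; case/imsetP => x; rewrite inE => xs ez.
    move: zin; rewrite inE ez => /andP[gxS _].
    rewrite -g'E //; apply: imset_f; rewrite inE mem_rcons in_cons xs orbT /= idx // idxv.
    by rewrite index_mem xs /= g'E.
  rewrite g'E // => /(gS _ ws) h; exact: subset_trans h (sub _ ws).
Qed.


Ltac clia := repeat match goal with H : _ |- _ => clear H end; lia.

Theorem corollary4p2 (T : finType) (e : rel T) (C : finType) (k : nat)
  (L : T -> {set C}) (VB : {set T}) (r : T) :
  simple_graph e ->
  3 <= k ->
  (forall v, #|L v| = k) ->
  is_bug e VB r ->
  deg e r <= k ->
  #|[set u in ~: VB | e r u]| < #|VB| ->
  #|VB| <= k ->
  (exists y, hidden e VB y) ->
  safe e k L VB.
Proof.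
move=> [esym eirr] k3 Lk [rVB conn V3sub] degr hout hb [y [yVB ynb]] f fSE.
set b := #|VB|.
have hbk : b <= k := hb.
have b0 : 0 < b by rewrite /b card_gt0; apply/set0Pn; exists r.
pose out v := [set u in ~: VB | e v u].
pose A v := L v :\: f @: out v.
pose s0 := [seq x <- enum VB | (x != r) && (x != y)].
pose s1 := [seq x <- r :: s0 | x != y].
pose s := rcons s1 y.
have memS : forall x, (x \in s) = (x \in VB).
  move=> x; rewrite /s mem_rcons in_cons /s1 mem_filter in_cons /s0 mem_filter mem_enum.
  case: (x =P y) => [->|_]; first by rewrite yVB.
  case: (x =P r) => [->|_] /=; by rewrite ?rVB ?andbT.
have us : uniq s.
  have u0 : uniq (r :: s0).
    rewrite /= /s0 mem_filter eqxx /=; apply: filter_uniq; exact: enum_uniq.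
  rewrite /s rcons_uniq; apply/andP; split; first by rewrite /s1 mem_filter eqxx.
  exact: filter_uniq.
have sizeS : size s = b.
  rewrite -(card_uniqP us) /b; apply: eq_card => x; by rewrite memS.
have idxy : index y s = b.-1.
  by rewrite -sizeS /s -cats1 index_cat /s1 mem_filter eqxx /= eqxx addn0 size_cat addn1.
have idxo : forall x, x \in VB -> x != y -> index x s < b.-1.
  move=> x xV xy; rewrite -sizeS /s -cats1 index_cat.
  have xs1 : x \in s1 by move: (memS x); rewrite xV /s mem_rcons in_cons (negbTE xy).
  by rewrite xs1 size_cat addn1 /= index_mem.
have idxr : r != y -> index r s = 0.
  by move=> ry; rewrite /s /s1 /= ry /= eqxx.
have outy : #|out y| = 0.
  apply/eqP; rewrite cards_eq0; apply/eqP/setP => u; rewrite !inE.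
  apply/negP => /andP[uV eyu]; move/subsetP: ynb => /(_ u); rewrite inE eyu => /(_ isT) uV'.
  by rewrite uV' in uV.
have outm : forall v, v \in VB -> v != r -> #|out v| <= 1.
  move=> v vV vr.
  have dv : deg e v <= 2.
    rewrite leqNgt; apply/negP => d3.
    have : v \in [set r] by apply: (subsetP V3sub); rewrite inE vV inE d3.
    by rewrite inE (negbTE vr).
  have [w ew wV] : exists2 w, e v w & w \in VB.
    have := conn v r vV rVB; case/connectP => p.
    case: p => [|z p] /=; first by move=> _ rv; rewrite rv eqxx in vr.
    by case/andP => /and3P[evz _ zV] _ _; exists z.
  have sub : out v \subset [set u | e v u] :\ w.
    apply/subsetP => u; rewrite !inE => /andP[uV evu]; rewrite evu andbT.
    by apply/eqP => uw; rewrite uw wV in uV.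
  have := subset_leq_card sub; have := cardsD1 w [set u | e v u]; rewrite inE ew.
  move: dv; rewrite /deg; clia.
have Abound : forall v, k - #|out v| <= #|A v|.
  move=> v; rewrite /A cardsD Lk.
  have : #|L v :&: f @: out v| <= #|out v|.
    apply: leq_trans (leq_imset_card f (out v)); apply: subset_leq_card; exact: subsetIr.
  clia.
have hob : #|out r| < b := hout.
have hidx : forall v, v \in s -> index v s < #|A v|.
  move=> v; rewrite memS => vV.
  case: (v =P y) => [->|/eqP vy]; first by rewrite idxy; have := Abound y; rewrite outy; move: hbk b0; clia.
  case: (v =P r) => [evr|/eqP vr].
    rewrite evr in vy *; rewrite idxr //; have := Abound r; move: hob hbk; clia.
  have := idxo v vV vy; have := outm v vV vr; have := Abound v; move: hbk; clia.
pose S := [set c | #|[set v in ~: VB | f v == c]| == ceil_div #|~: VB| k].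
have Sdef : forall c, (c \in S) = (#|[set v in ~: VB | f v == c]| == ceil_div #|~: VB| k).
  by move=> c; rewrite inE.
clearbody S.
have [g [gA ginj gS]] := greedy S f us hidx.
have gAV : forall v, v \in VB -> g v \in A v by move=> v; rewrite -memS; exact: gA.
have ginjV : {in VB &, injective g} by move=> x z; rewrite -!memS; exact: ginj.
pose P v := [set x | [&& x \in s, index x s < index v s & g x \notin S]].
pose X := VB :\: [set v | g v \in S].
have Pdef : forall v x, (x \in P v) = [&& x \in s, index x s < index v s & g x \notin S].
  by move=> v x; rewrite inE.
have Xdef : forall x, (x \in X) = (x \in VB) && (g x \notin S).
  by move=> x; rewrite !inE andbC.
have XV : X \subset VB by apply: subsetDl.
clearbody P X.
have PX : forall v, P v \subset X.
  move=> v; apply/subsetP => x; rewrite Pdef Xdef -memS => /and3P[-> _ ->] //.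
have fail : forall v, v \in VB -> g v \in S -> k - #|out v| - #|S| <= #|P v|.
  move=> v vV gvS; have := gS v; rewrite memS => /(_ vV gvS) /subset_leq_card h.
  have h2 : #|[set g x | x : T & [&& x \in s, index x s < index v s & g x \notin S]]| <= #|P v|.
    apply: leq_trans (leq_imset_card _ _) _; apply: subset_leq_card; apply/subsetP => x.
    by rewrite Pdef ?inE.
  have h3 := Abound v; have := cardsD (A v) S.
  have : #|A v :&: S| <= #|S| by apply: subset_leq_card; exact: subsetIr.
  move=> i1 i2; apply: leq_trans (leq_trans h h2); move: h3 i1 i2; clia.
have cX : #|X| <= b by exact: subset_leq_card XV.
have claim : #|X| = b \/ k - #|S| <= #|X|.
  case gyS : (g y \in S).
    right; have := fail y yVB gyS; rewrite outy; have := subset_leq_card (PX y); clia.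
  have yX : y \in X by rewrite Xdef gyS yVB.
  case: (boolP [exists v in VB, (v != r) && (v != y) && (g v \in S)]).
    case/exists_inP => v vV /andP[/andP[vr vy] gvS]; right.
    have h := fail v vV gvS; have h1 := outm v vV vr.
    have : P v \subset X :\ y.
      apply/subsetP => x xP; rewrite in_setD1 (subsetP (PX v) x xP) andbT.
      apply/eqP => exy; move: xP; rewrite exy Pdef idxy => /and3P[_ hh _].
      have := idxo v vV vy; move: hh; clia.
    move/subset_leq_card; have := cardsD1 y X; rewrite yX; move: h h1; clia.
  move/exists_inPn => hmid.
  case grS : (g r \in S).
    right.
    have ry : r != y by apply/eqP => ery; rewrite ery gyS in grS.
    have h := fail r rVB grS.
    have P0 : P r = set0.
      apply/setP => x; rewrite Pdef inE idxr //; by rewrite ltn0 andbF.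
    rewrite P0 cards0 in h.
    have : VB :\ r \subset X.
      apply/subsetP => x; rewrite in_setD1 => /andP[xr xV]; rewrite Xdef xV /=.
      case: (x =P y) => [->|/eqP xy]; first by rewrite gyS.
      by have := hmid x xV; rewrite xr xy /=.
    move/subset_leq_card; have := cardsD1 r VB; rewrite rVB; rewrite -/b; move: h hob; clia.
  left; apply/eqP; rewrite eqn_leq cX /=; apply: subset_leq_card.
  apply/subsetP => x xV; rewrite Xdef xV /=.
  case: (x =P y) => [->|/eqP xy]; first by rewrite gyS.
  case: (x =P r) => [->|/eqP xr]; first by rewrite grS.
  by have := hmid x xV; rewrite xr xy /=.
pose h v := if v \in VB then g v else f v.
exists h; split; last by move=> v; rewrite inE /h => /negbTE ->.
case: fSE => [[fL fP] fcnt].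
split.
  split.
    move=> v _; rewrite /h; case: ifP => vV.
      by move: (gAV v vV); rewrite /A in_setD => /andP[_ ->].
    by apply: fL; rewrite inE vV.
  move=> x z _ _ exz; rewrite /h; case: ifP => xV; case: ifP => zV.
  - apply/eqP => gg; have exz' := ginjV x z xV zV gg; by rewrite exz' eirr in exz.
  - apply/eqP => gf; move: (gAV x xV); rewrite /A in_setD gf imset_f //.
    by rewrite /out !inE zV exz.
  - apply/eqP => gf; move: (gAV z zV); rewrite /A in_setD -gf imset_f //.
    by rewrite /out !inE xV esym exz.
  - by apply: fP; rewrite ?inE ?xV ?zV.
right.
have cls : forall c, #|[set v in [set: T] | h v == c]| = #|[set v in ~: VB | f v == c]| + (c \in g @: VB).
  move=> c; rewrite -(cardsID VB [set v in [set: T] | h v == c]).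
  have -> : [set v in [set: T] | h v == c] :\: VB = [set v in ~: VB | f v == c].
    by apply/setP => v; rewrite !inE /h; case: (v \in VB).
  have -> : #|[set v in [set: T] | h v == c] :&: VB| = (c \in g @: VB).
    case: (boolP (c \in g @: VB)) => [/imsetP[x xV ->]|cn].
      rewrite (_ : _ :&: VB = [set x]) ?cards1 //; apply/setP => v; rewrite !inE /h.
      case vV: (v \in VB); rewrite ?andbF ?andbT /=.
        by apply/eqP/eqP => [gv|->] //; apply: ginjV.
      by case: eqP => // vx; rewrite vx xV in vV.
    rewrite (_ : _ :&: VB = set0) ?cards0 //; apply/setP => v; rewrite !inE /h.
    case vV: (v \in VB); rewrite ?andbF ?andbT //=.
    by apply/negP => /eqP gv; case/negP: cn; rewrite -gv imset_f.
  by rewrite addnC.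
have hn : #|[set: T]| = #|~: VB| + b by rewrite cardsT -(cardsC VB) addnC.
have bit : forall c, (c \in g @: VB) <= 1 by move=> c; case: (c \in _).
have k0 : 0 < k by move: k3; clia.
case: (posnP #|~: VB|) => n0.
  have old0 : forall c, #|[set v in ~: VB | f v == c]| = 0.
    move=> c; apply/eqP; rewrite -leqn0 -n0; apply: subset_leq_card.
    by apply/subsetP => v; rewrite inE => /andP[].
  have [Q1 M1] := @ceil_char k 1 b #|[set: T]| k0 isT b0 hbk ltac:(rewrite hn n0; clia).
  rewrite Q1 M1; split.
    by move=> c; rewrite cls old0 add0n bit.
  apply: leq_trans (leq_imset_card g VB); apply: subset_leq_card.
  by apply/subsetP => c; rewrite inE cls old0 add0n; case: (c \in _).
case: fcnt => [n00|[bnd full]]; first by rewrite n00 in n0.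
have [dq m0 mk q0] := decomp k0 n0.
move: dq m0 mk q0 bnd full Sdef.
set q := ceil_div #|~: VB| k; set m := modstar #|~: VB| k => dq m0 mk q0 bnd full Sdef.
have cS : #|S| <= m.
  apply: leq_trans full; apply: subset_leq_card; apply/subsetP => c; by rewrite Sdef inE.
pose Y := VB :&: [set v | g v \in S].
have XY : #|X| + #|Y| = b.
  rewrite addnC /b -(cardsID [set v | g v \in S] VB); congr (_ + _).
  by apply: eq_card => x; rewrite Xdef !inE andbC.
case: (leqP (m + b) k) => mb.
  have [Q1 M1] := @ceil_char k q (m + b) #|[set: T]| k0 q0 ltac:(move: b0; clear; clia) mb
     ltac:(rewrite hn dq; clear; clia).
  rewrite Q1 M1.
  have Xb : #|X| = b by move: claim cX cS mb; clear; clia.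
  have Y0 : Y = set0 by apply/eqP; rewrite -cards_eq0; move: XY Xb; clear; clia.
  have gnS : forall x, x \in VB -> g x \notin S.
    move=> x xV; apply/negP => gS'; have : x \in Y by rewrite !inE xV gS'.
    by rewrite Y0 inE.
  split.
    move=> c; rewrite cls; case: (boolP (c \in g @: VB)) => [/imsetP[x xV ->]|_].
      have := bnd (g x); have := gnS x xV; rewrite Sdef; move=> /negP ne; rewrite /= leq_eqVlt.
      by case/orP => [/eqP eq|]; [case: ne; apply/eqP | rewrite addn1].
    by rewrite addn0 bnd.
  have sub : [set c | #|[set v in [set: T] | h v == c]| == q] \subset S :|: g @: VB.
    apply/subsetP => c; rewrite !inE cls; case: (c \in g @: VB); rewrite ?orbT //.
    by rewrite addn0 Sdef orbF.
  apply: leq_trans (subset_leq_card sub) _; rewrite cardsU.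
  have := leq_imset_card g VB; move: cS; clear; clia.
have e2 : #|[set: T]| = (q.+1 - 1) * k + (m + b - k).
  rewrite hn dq; have -> : q.+1 - 1 = (q - 1).+1 by move: q0; clear; clia.
  rewrite mulSn; move: mb; clear; clia.
have [Q1 M1] := @ceil_char k q.+1 (m + b - k) #|[set: T]| k0 isT
   ltac:(move: mb; clear; clia) ltac:(move: mk hbk; clear; clia) e2.
rewrite Q1 M1; split.
  by move=> c; rewrite cls -addn1; exact: leq_add (bnd c) (bit c).
have sub : [set c | #|[set v in [set: T] | h v == c]| == q.+1] \subset g @: Y.
  apply/subsetP => c; rewrite inE cls.
  case: (boolP (c \in g @: VB)) => [/imsetP[x xV ->]|_].
    rewrite addn1 eqSS => /eqP oq; apply: imset_f; rewrite !inE xV Sdef oq eqxx.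
    done.
  rewrite addn0 => /eqP oq; have := bnd c; rewrite oq; clear; clia.
apply: leq_trans (subset_leq_card sub) _; apply: leq_trans (leq_imset_card g Y) _.
move: XY claim cS mb cX; clear; clia.
Qed.
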